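(* Assume $C^\top C\succ0$, let $\gamma>0$, $\sigma>0$, $\lambda>0$, and let $(\widetilde W_r)_{r\ge0}$ be generated by the alternating scheme of the context from a feasible initial point $\widetilde W_0\in\mathcal{X}_1$, $y_0\in\mathbb{R}^{mn}_+$. Let $H^\infty_\sigma=\lim_{r\to\infty}H_\sigma(\widetilde W_r)$ (the sequence $H_\sigma(\widetilde W_r)$ is nonincreasing and bounded below) and $H^*_\sigma=\inf_{\widetilde W}H_\sigma(\widetilde W)$. If $H^\infty_\sigma=H^*_\sigma$, then every cluster point of $(\widetilde W_r)$ belongs to $\operatorname{argmin}H_\sigma$.
   Context: Let $n,m,M\ge1$, $p=m+n$. For $i=1,\dots,M$ let $A_i\in\mathbb{R}^{n\times n}$, $B_{2,i}\in\mathbb{R}^{n\times m}$, $F_i=\begin{bmatrix}A_i&B_{2,i}\\0&0\end{bmatrix}$. Let $B_1\in\mathbb{R}^{n\times l}$, $C\in\mathbb{R}^{q\times n}$, $D\in\mathbb{R}^{q\times m}$ with $C^\top D=0$, $D^\top D\succ0$, $B_1B_1^\top\succ0$; $Q=\begin{bmatrix}B_1B_1^\top&0\\0&0\end{bmatrix}$, $R=\begin{bmatrix}C^\top C&0\\0&D^\top D\end{bmatrix}$, $V_1=[0,\ I_m]$, $V_2=[I_n,\ 0]$, $\Psi_i(W)=-V_2(F_iW+WF_i^\top+Q)V_2^\top$. $\mathrm{vec}$ is column-stacking; $\mathcal{P}:=V_2\otimes V_1$, so $\mathcal{P}\,\mathrm{vec}(W)=\mathrm{vec}(V_1WV_2^\top)$.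 $\Gamma^k_+=\{\mathrm{vec}(X):X\in\mathbb{S}^k_+\}$, $\delta_S$ the indicator of $S$, $\Omega=\{\mathrm{vec}(W):W_{ij}=0,\ 1\le i<j\le n\}$, $\mathcal{X}_1=\{\mathrm{vec}(W)\in\Gamma^p_+:\mathrm{vec}(\Psi_i(W))\in\Gamma^n_+\ \forall i,\ \mathrm{vec}(W)\in\Omega\}$, $r_1(\widetilde W)=\langle\mathrm{vec}(R),\widetilde W\rangle+\delta_{\mathcal{X}_1}(\widetilde W)$. For $x\in\mathbb{R}^{mn}$, $f_\sigma(x)=\sum_\ell(1-e^{-x_\ell/\sigma})$, $g_\sigma=-f_\sigma$, $g_\sigma^*$ its convex conjugate; $|\cdot|$ componentwise. $H_\sigma(\widetilde W)=r_1(\widetilde W)+\gamma f_\sigma(|\mathcal{P}\widetilde W|)$. Scheme: for $r=1,2,\dots$: if $r$ is odd, $\widetilde W_r=\widetilde W_{r-1}$ and $y_r=\operatorname{argmin}_{y\in\mathbb{R}^{mn}_+}\{\gamma g_\sigma^*(-y)+\gamma y^\top|\mathcal{P}\widetilde W_{r-1}|\}=\nabla f_\sigma(|\mathcal{P}\widetilde W_{r-1}|)$; if $r$ is even, $y_r=y_{r-1}$ and $\widetilde W_r\in\operatorname{argmin}_{\widetilde W\in\mathcal{X}_1}\{\langle\mathrm{vec}(R),\widetilde W\rangle+\gamma y_{r-1}^\top|\mathcal{P}\widetilde W|+\frac1{2\lambda}\|\widetilde W-\widetilde W_{r-1}\|^2\}$. *)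

(* Defs.v *)
From HB Require Import structures.
From mathcomp Require Import all_boot all_order all_algebra.
From mathcomp Require Import all_classical all_reals all_analysis.
Set Implicit Arguments. Unset Strict Implicit. Unset Printing Implicit Defensive.
Import Order.TTheory GRing.Theory Num.Theory.
Local Open Scope ring_scope.

Section Defs.
Variable R : realType.

Definition psd (k : nat) (X : 'M[R]_k) : Prop :=
  X^T = X /\ forall v : 'cV[R]_k, 0 <= (v^T *m X *m v) 0 0.

Definition pd (k : nat) (X : 'M[R]_k) : Prop :=
  X^T = X /\ forall v : 'cV[R]_k, v != 0 -> 0 < (v^T *m X *m v) 0 0.

Variables n m : nat.
(* p = n + m, with the first block of size n (as in F_i, Q, R, V1, V2). *)

Definition Fmx (A : 'M[R]_n) (B2 : 'M[R]_(n, m)) : 'M[R]_(n + m) :=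
  block_mx A B2 0 0.

Definition Qmx (l : nat) (B1 : 'M[R]_(n, l)) : 'M[R]_(n + m) :=
  block_mx (B1 *m B1^T) 0 0 0.

Definition Rmx (q : nat) (C : 'M[R]_(q, n)) (D : 'M[R]_(q, m)) : 'M[R]_(n + m) :=
  block_mx (C^T *m C) 0 0 (D^T *m D).

Definition V1 : 'M[R]_(m, n + m) := row_mx 0 1%:M.
Definition V2 : 'M[R]_(n, n + m) := row_mx 1%:M 0.

Definition Psi (l : nat) (A : 'M[R]_n) (B2 : 'M[R]_(n, m)) (B1 : 'M[R]_(n, l))
  (W : 'M[R]_(n + m)) : 'M[R]_n :=
  - (V2 *m (Fmx A B2 *m W + W *m (Fmx A B2)^T + Qmx B1) *m V2^T).

(* Omega: W_ij = 0 for 1 <= i < j <= n (0-based: i < j < n) *)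
Definition Omega (W : 'M[R]_(n + m)) : Prop :=
  forall i j : 'I_(n + m), (i < j)%N -> (j < n)%N -> W i j = 0.

Definition X1 (M l : nat) (A : 'I_M -> 'M[R]_n) (B2 : 'I_M -> 'M[R]_(n, m))
  (B1 : 'M[R]_(n, l)) (W : 'M[R]_(n + m)) : Prop :=
  psd W /\ (forall i : 'I_M, psd (Psi (A i) (B2 i) B1 W)) /\ Omega W.

(* <vec X, vec Y> : Euclidean inner product of the vectorizations *)
Definition inner (a b : nat) (X Y : 'M[R]_(a, b)) : R :=
  \sum_(i < a) \sum_(j < b) X i j * Y i j.

Definition sqnorm (a b : nat) (X : 'M[R]_(a, b)) : R := inner X X.

(* P vec(W) = vec(V1 W V2^T) *)
Definition Pmx (W : 'M[R]_(n + m)) : 'M[R]_(m, n) := V1 *m W *m V2^T.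

Definition absmx (a b : nat) (X : 'M[R]_(a, b)) : 'M[R]_(a, b) :=
  map_mx (fun x => `|x|) X.

(* f_sigma(x) = sum_l (1 - exp(-x_l/sigma)), x in R^{mn} (stored as m x n) *)
Definition fsig (sigma : R) (x : 'M[R]_(m, n)) : R :=
  \sum_(i < m) \sum_(j < n) (1 - expR (- x i j / sigma)).

Definition grad_fsig (sigma : R) (x : 'M[R]_(m, n)) : 'M[R]_(m, n) :=
  \matrix_(i, j) (expR (- x i j / sigma) / sigma).

Definition Hsig (M l q : nat) (A : 'I_M -> 'M[R]_n) (B2 : 'I_M -> 'M[R]_(n, m))
  (B1 : 'M[R]_(n, l)) (C : 'M[R]_(q, n)) (D : 'M[R]_(q, m))
  (gamma sigma : R) (W : 'M[R]_(n + m)) : \bar R :=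
  if `[< X1 A B2 B1 W >] then
    ((inner (Rmx C D) W + gamma * fsig sigma (absmx (Pmx W))) : R)%:E
  else +oo%E.

Definition Wstep_obj (q : nat) (C : 'M[R]_(q, n)) (D : 'M[R]_(q, m))
  (gamma lambda : R) (y : 'M[R]_(m, n)) (Wprev W : 'M[R]_(n + m)) : R :=
  inner (Rmx C D) W + gamma * inner y (absmx (Pmx W))
  + (2 * lambda)^-1 * sqnorm (W - Wprev).

Definition alt_scheme (M l q : nat) (A : 'I_M -> 'M[R]_n) (B2 : 'I_M -> 'M[R]_(n, m))
  (B1 : 'M[R]_(n, l)) (C : 'M[R]_(q, n)) (D : 'M[R]_(q, m))
  (gamma sigma lambda : R)
  (W : nat -> 'M[R]_(n + m)) (y : nat -> 'M[R]_(m, n)) : Prop :=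
  forall r : nat, (0 < r)%N ->
    if odd r then
      W r = W r.-1 /\ y r = grad_fsig sigma (absmx (Pmx (W r.-1)))
    else
      y r = y r.-1 /\ X1 A B2 B1 (W r) /\
      forall W' : 'M[R]_(n + m), X1 A B2 B1 W' ->
        Wstep_obj C D gamma lambda (y r.-1) (W r.-1) (W r)
        <= Wstep_obj C D gamma lambda (y r.-1) (W r.-1) W'.

End Defs.

(* Main.v *)
Require Import Defs.
From HB Require Import structures.
From mathcomp Require Import all_boot all_order all_algebra.
From mathcomp Require Import all_classical all_reals all_analysis.
From mathcomp Require Import ring lra.
Import Order.TTheory GRing.Theory Num.Theory.
Import numFieldNormedType.Exports.
Local Open Scope ring_scope.
Local Open Scope classical_set_scope.
Set Implicit Arguments. Unset Strict Implicit. Unset Printing Implicit Defensive.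

Section Cont.
Variables (R : realType) (T : topologicalType).

Definition mcont (a b : nat) (F : T -> 'M[R]_(a, b)) :=
  forall i j, continuous (fun x => F x i j).

Lemma cont_cst (c : R) : continuous (fun _ : T => c).
Proof. move=> x; exact: cvg_cst. Qed.

Lemma cont_add (f g : T -> R) : continuous f -> continuous g ->
  continuous (fun x => f x + g x).
Proof. by move=> cf cg x; apply: cvgD; [exact: cf|exact: cg]. Qed.

Lemma cont_mul (f g : T -> R) : continuous f -> continuous g ->
  continuous (fun x => f x * g x).
Proof. by move=> cf cg x; apply: cvgM; [exact: cf|exact: cg]. Qed.

Lemma cont_opp (f : T -> R) : continuous f -> continuous (fun x => - f x).
Proof. by move=> cf x; apply: cvgN; exact: cf. Qed.

Lemma cont_comp (f : T -> R) (h : R -> R) : continuous f -> continuous h ->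
  continuous (fun x => h (f x)).
Proof. by move=> cf ch x; apply: continuous_comp; [exact: cf|exact: ch]. Qed.

Lemma cont_sum (k : nat) (f : 'I_k -> T -> R) : (forall i, continuous (f i)) ->
  continuous (fun x => \sum_(i < k) f i x).
Proof.
move=> cf; apply: continuous_big; first exact: add_continuous.
by move=> i _; exact: cf.
Qed.

Lemma mcont_cst a b (c : 'M[R]_(a, b)) : mcont (fun _ => c).
Proof. by move=> i j; exact: cont_cst. Qed.

Lemma mcont_add a b (F G : T -> 'M[R]_(a, b)) : mcont F -> mcont G ->
  mcont (fun x => F x + G x).
Proof.
move=> cF cG i j; rewrite (_ : (fun x => _) = (fun x => F x i j + G x i j)).
  exact: cont_add.
by apply/funext => x; rewrite mxE.
Qed.

Lemma mcont_opp a b (F : T -> 'M[R]_(a, b)) : mcont F -> mcont (fun x => - F x).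
Proof.
move=> cF i j; rewrite (_ : (fun x => _) = (fun x => - F x i j)).
  exact: cont_opp.
by apply/funext => x; rewrite mxE.
Qed.

Lemma mcont_mul a b c (F : T -> 'M[R]_(a, b)) (G : T -> 'M[R]_(b, c)) :
  mcont F -> mcont G -> mcont (fun x => F x *m G x).
Proof.
move=> cF cG i j; rewrite (_ : (fun x => _) = (fun x => \sum_k F x i k * G x k j)).
  by apply: cont_sum => k; apply: cont_mul.
by apply/funext => x; rewrite mxE.
Qed.

Lemma mcont_tr a b (F : T -> 'M[R]_(a, b)) : mcont F -> mcont (fun x => (F x)^T).
Proof.
move=> cF i j; rewrite (_ : (fun x => _) = (fun x => F x j i)) //.
by apply/funext => x; rewrite mxE.
Qed.

Lemma mcont_map a b (F : T -> 'M[R]_(a, b)) (h : R -> R) : mcont F -> continuous h ->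
  mcont (fun x => map_mx h (F x)).
Proof.
move=> cF ch i j; rewrite (_ : (fun x => _) = (fun x => h (F x i j))).
  exact: cont_comp.
by apply/funext => x; rewrite mxE.
Qed.

End Cont.

Lemma mcont_id (R : realType) a b : mcont (fun x : 'M[R]_(a, b) => x).
Proof. move=> i j; exact: coord_continuous. Qed.

Lemma cluster_le (R : realType) a b (W : nat -> 'M[R]_(a, b)) Wbar
  (phi : 'M[R]_(a, b) -> R) c r :
  continuous phi -> cluster (W @ \oo) Wbar ->
  (forall s, (r <= s)%N -> phi (W s) <= c) -> phi Wbar <= c.
Proof.
move=> cphi cl H; rewrite leNgt; apply/negP => lt.
have N1 : nbhs Wbar (phi @^-1` [set x | c < x]).
  apply: (cphi Wbar); apply: open_nbhs_nbhs; split; [exact: open_gt | exact: lt].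
have N2 : (W @ \oo) [set x | phi x <= c].
  by exists r => // s /= rs; apply: H.
have [x [/= h1 h2]] := cl _ _ N2 N1.
by rewrite ltNge h1 in h2.
Qed.

Lemma exp_concave (R : realType) (sigma a b : R) : 0 < sigma ->
  1 - expR (- b / sigma) <=
  1 - expR (- a / sigma) + (expR (- a / sigma) / sigma * b - expR (- a / sigma) / sigma * a).
Proof.
move=> s0.
have E : expR (- b / sigma) = expR (- a / sigma) * expR ((a - b) / sigma).
  by rewrite -expRD; congr expR; ring.
have H1 := expR_ge1Dx ((a - b) / sigma).
have Ep : 0 < expR (- a / sigma) := expR_gt0 _.
have H2 : expR (- a / sigma) * (1 + (a - b) / sigma) <= expR (- b / sigma).
  by rewrite E ler_wpM2l // ltW.
have H3 : expR (- a / sigma) / sigma * b - expR (- a / sigma) / sigma * a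
   = - (expR (- a / sigma) * ((a - b) / sigma)).
  by ring.
rewrite H3; move: H2; set e := expR _; set t := (a - b) / sigma; set f := expR _.
nra.
Qed.

Lemma fsig_concave (R : realType) n m (sigma : R) (x x' : 'M[R]_(m, n)) :
  0 < sigma ->
  fsig sigma x' <= fsig sigma x +
    (inner (grad_fsig sigma x) x' - inner (grad_fsig sigma x) x).
Proof.
move=> s0; rewrite /fsig /inner -sumrB -big_split /=; apply: ler_sum => i _.
rewrite -sumrB -big_split /=; apply: ler_sum => j _; rewrite !mxE.
exact: exp_concave.
Qed.

Section Clos.
Variables (R : realType) (a b : nat) (W : nat -> 'M[R]_(a, b)) (Wbar : 'M[R]_(a, b)).
Hypothesis cl : cluster (W @ \oo) Wbar.

Lemma cluster_ge (phi : 'M[R]_(a, b) -> R) c :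
  continuous phi -> (forall s, c <= phi (W s)) -> c <= phi Wbar.
Proof.
move=> cphi H; rewrite -(opprK c) lerNl.
apply: (@cluster_le _ _ _ W Wbar (fun x => - phi x) (- c) 0%N) => //.
  exact: cont_opp.
by move=> s _; rewrite lerNl opprK.
Qed.

Lemma cluster_eq (phi : 'M[R]_(a, b) -> R) c :
  continuous phi -> (forall s, phi (W s) = c) -> phi Wbar = c.
Proof.
move=> cphi H; apply/le_anti/andP; split.
  by apply: (@cluster_le _ _ _ W Wbar phi c 0%N) => // s _; rewrite H.
by apply: cluster_ge => // s; rewrite H.
Qed.

Lemma psd_cl k (F : 'M[R]_(a, b) -> 'M[R]_k) : mcont F ->
  (forall s, psd (F (W s))) -> psd (F Wbar).
Proof.
move=> cF H; split.
  apply/matrixP => i j; rewrite mxE; apply/eqP; rewrite -subr_eq0; apply/eqP.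
  apply: (@cluster_eq (fun x => F x j i - F x i j)).
    by apply: cont_add; [exact: cF | apply: cont_opp; exact: cF].
  move=> s; have := (H s).1; move/matrixP/(_ i j); rewrite mxE => ->.
  by rewrite subrr.
move=> v; apply: (@cluster_ge (fun x => (v^T *m F x *m v) 0 0)).
  apply: mcont_mul; last exact: mcont_cst.
  apply: mcont_mul => //; exact: mcont_cst.
by move=> s; exact: (H s).2.
Qed.

End Clos.

Lemma sqnorm_ge0 (R : realType) a b (X : 'M[R]_(a, b)) : 0 <= sqnorm X.
Proof. by apply: sumr_ge0 => i _; apply: sumr_ge0 => j _; exact: mulr_ge0_le0 || rewrite -expr2 sqr_ge0. Qed.

Lemma sqnorm0 (R : realType) a b : sqnorm (0 : 'M[R]_(a, b)) = 0.
Proof. by apply: big1 => i _; apply: big1 => j _; rewrite mxE mulr0. Qed.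

Unset Implicit Arguments.
Set Strict Implicit.

Theorem theorem29 (R : realType) (n m M l q : nat)
  (A : 'I_M -> 'M[R]_n) (B2 : 'I_M -> 'M[R]_(n, m))
  (B1 : 'M[R]_(n, l)) (C : 'M[R]_(q, n)) (D : 'M[R]_(q, m))
  (gamma sigma lambda : R)
  (W : nat -> 'M[R]_(n + m)) (y : nat -> 'M[R]_(m, n)) :
  (0 < n)%N -> (0 < m)%N -> (0 < M)%N ->
  C^T *m D = 0 -> pd (D^T *m D) -> pd (B1 *m B1^T) ->
  pd (C^T *m C) ->
  0 < gamma -> 0 < sigma -> 0 < lambda ->
  X1 A B2 B1 (W 0%N) -> (forall i j, 0 <= y 0%N i j) ->
  alt_scheme A B2 B1 C D gamma sigma lambda W y ->
  limn (fun r => Hsig A B2 B1 C D gamma sigma (W r))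
    = ereal_inf (range (Hsig A B2 B1 C D gamma sigma)) ->
  forall Wbar : 'M[R]_(n + m), cluster (W @ \oo) Wbar ->
    forall W' : 'M[R]_(n + m),
      (Hsig A B2 B1 C D gamma sigma Wbar <= Hsig A B2 B1 C D gamma sigma W')%E.
Proof.
move=> _ _ _ _ _ _ _ g0 s0 l0 X0 _ sch Hlim Wbar cl W'.
pose g := fun W0 : 'M[R]_(n + m) =>
  inner (Rmx C D) W0 + gamma * fsig sigma (absmx (Pmx W0)).
have HsE : forall W0, X1 A B2 B1 W0 -> Hsig A B2 B1 C D gamma sigma W0 = (g W0)%:E.
  by move=> W0 h; rewrite /Hsig asboolT.
have Feas : forall r, X1 A B2 B1 (W r).
  elim=> [//|r IH]; have := sch r.+1 isT.
  by case: (odd r.+1) => [[-> _]|[_ [h _]]].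
have Step : forall r, g (W r.+1) <= g (W r).
  move=> r; have := sch r.+1 isT => /=.
  case Hr: (odd r) => /=; last by case=> ->.
  move=> [_ [_ Hmin]].
  have := sch r; rewrite Hr; case: r Hr Hmin => [//|r'] Hr Hmin.
  move=> /(_ isT) [EW Ey]; rewrite /= -EW in Ey.
  have := Hmin (W r'.+1) (Feas _); rewrite Ey /Wstep_obj subrr sqnorm0 mulr0 addr0.
  have := fsig_concave (absmx (Pmx (W r'.+1))) (absmx (Pmx (W r'.+2))) s0.
  move=> /(ler_wpM2l (ltW g0)) hc hm.
  have hS := sqnorm_ge0 (W r'.+2 - W r'.+1).
  have hk : 0 < (2 * lambda)^-1 by rewrite invr_gt0 mulr_gt0.
  have hkS := mulr_ge0 (ltW hk) hS.
  rewrite /g; move: hc hm hkS; rewrite mulrDr mulrBr; lra.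
have Mono : forall r k, g (W (r + k)%N) <= g (W r).
  move=> r; elim=> [|k IH]; first by rewrite addn0.
  by rewrite addnS; apply: le_trans (Step _) IH.
have cP : mcont (fun W0 : 'M[R]_(n + m) => absmx (Pmx W0)).
  apply: mcont_map; last exact: norm_continuous.
  apply: mcont_mul; last exact: mcont_cst.
  apply: mcont_mul; [exact: mcont_cst | exact: mcont_id].
have cg : continuous g.
  apply: cont_add.
    apply: cont_sum => i; apply: cont_sum => j.
    apply: cont_mul; [exact: cont_cst | exact: mcont_id].
  apply: cont_mul; first exact: cont_cst.
  apply: cont_sum => i; apply: cont_sum => j.
  apply: cont_add; first exact: cont_cst.
  apply: cont_opp; apply: cont_comp; last exact: continuous_expR.
  apply: cont_mul; last exact: cont_cst.
  by apply: cont_opp; exact: cP.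
have FeasBar : X1 A B2 B1 Wbar.
  split; [|split].
  - apply: (@psd_cl _ _ _ W Wbar cl _ (fun x => x)); first exact: mcont_id.
    by move=> s; case: (Feas s).
  - move=> i; apply: (@psd_cl _ _ _ W Wbar cl _ (fun x => Psi (A i) (B2 i) B1 x)).
      rewrite /Psi; apply: mcont_opp.
      apply: mcont_mul; last exact: mcont_cst.
      apply: mcont_mul; first exact: mcont_cst.
      apply: mcont_add; last exact: mcont_cst.
      apply: mcont_add.
        apply: mcont_mul; [exact: mcont_cst | exact: mcont_id].
      apply: mcont_mul; [exact: mcont_id | exact: mcont_cst].
    by move=> s; case: (Feas s) => _ [h _]; exact: h.
  - move=> i j ij jn.
    apply: (@cluster_eq _ _ _ W Wbar cl (fun x => x i j)); first exact: mcont_id.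
    by move=> s; case: (Feas s) => _ [_ h]; exact: h.
have gbar : forall r, g Wbar <= g (W r).
  move=> r; apply: (@cluster_le _ _ _ W Wbar g _ r) => // s rs.
  by rewrite -(subnKC rs); exact: Mono.
have Hmono : nonincreasing_seq (fun r => Hsig A B2 B1 C D gamma sigma (W r)).
  move=> r s rs; rewrite !HsE // lee_fin.
  by rewrite -(subnKC rs); exact: Mono.
have Hl : limn (fun r => Hsig A B2 B1 C D gamma sigma (W r)) =
    ereal_inf (range (fun r => Hsig A B2 B1 C D gamma sigma (W r))).
  apply: cvg_lim; first exact: ereal_hausdorff.
  exact: ereal_nonincreasing_cvgn.
apply: (@le_trans _ _ (ereal_inf (range (fun r => Hsig A B2 B1 C D gamma sigma (W r))))).
  apply: le_ereal_inf_tmp => _ [r _ <-]; rewrite !HsE // lee_fin; exact: gbar.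
rewrite -Hl Hlim; apply: ge_ereal_inf.
by exists (Hsig A B2 B1 C D gamma sigma W').
Qed.
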